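(* Let $K\geq 2$ be an integer, let $\mathcal{X}_1,\dots,\mathcal{X}_K$ be Euclidean (finite-dimensional real inner product) spaces with inner products $\langle\cdot,\cdot\rangle_k$ and norms $\Vert\cdot\Vert_k$, and let $X_1,\dots,X_K$ be random variables on a probability space $(\Omega,\mathcal{A},P)$ with $X_k$ valued in $\mathcal{X}_k$, $\mathbb{E}(\Vert X_k\Vert_k^2)<+\infty$ and $\mathbb{E}(X_k)=0$ for every $k$. For $(k,\ell)\in\{1,\dots,K\}^2$ let $V_{k\ell}=\mathbb{E}(X_\ell\otimes X_k)$ and $V_k=V_{kk}$, and assume each $V_k$ is invertible. Let $\mathcal{X}=\mathcal{X}_1\times\cdots\times\mathcal{X}_K$ with inner product $\langle\alpha,\beta\rangle_{\mathcal{X}}=\sum_{k=1}^K\langle\alpha_k,\beta_k\rangle_k$, let $q=\dim\mathcal{X}$, and define the operators on $\mathcal{X}$ \[ \Phi=\sum_{k=1}^K\tau_k^\ast V_k\tau_k,\qquad \Psi=\sum_{k=1}^K\sum_{\ell=1,\ \ell\neq k}^K\tau_k^\ast V_{k\ell}\tau_\ell,\qquad T=\Phi^{-1/2}\Psi\Phi^{-1/2}. \] Let $\rho_1\geq\rho_2\geq\cdots\geq\rho_q$ be the eigenvalues of the self-adjoint operator $T$ (counted with multiplicity). Then: (i) for every $j\in\{1,\dots,q\}$, $-1\leq\rho_j\leq K(K-1)$; (ii) $\rho_j=0$ for all $j\in\{1,\dots,q\}$ if and only if $V_{k\ell}=0$ for all $(k,\ell)\in\{1,\dots,K\}^2$ with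 $k\neq\ell$.
   Context: For vectors $x,y$ in Euclidean spaces, $x\otimes y$ denotes the linear map $h\mapsto\langle x,h\rangle y$, so $V_{k\ell}=\mathbb{E}(X_\ell\otimes X_k)$ is a linear map from $\mathcal{X}_\ell$ to $\mathcal{X}_k$ with $\langle a,V_{k\ell}b\rangle_k=\mathbb{E}(\langle a,X_k\rangle_k\langle b,X_\ell\rangle_\ell)$. $\tau_k:\mathcal{X}\to\mathcal{X}_k$ is the canonical projection $\alpha\mapsto\alpha_k$, and its adjoint $\tau_k^\ast:\mathcal{X}_k\to\mathcal{X}$ maps $t$ to the element of $\mathcal{X}$ whose $k$-th component is $t$ and all other components are $0$. $\Phi$ is self-adjoint, positive and invertible, and $\Phi^{-1/2}=\sum_k\tau_k^\ast V_k^{-1/2}\tau_k$. The $\rho_j$ are called the canonical coefficients of the multiple-set linear canonical analysis of $(X_1,\dots,X_K)$. *)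

(* Defs.v *)
From HB Require Import structures.
From mathcomp Require Import all_boot all_order all_algebra.
From mathcomp Require Import all_classical all_reals all_analysis.
Set Implicit Arguments. Unset Strict Implicit. Unset Printing Implicit Defensive.
Import Order.TTheory GRing.Theory Num.Theory.
Local Open Scope ring_scope.

Definition posdef (R : realType) (n : nat) (A : 'M[R]_n) : Prop :=
  A^T = A /\ forall x : 'cV[R]_n, x != 0 -> 0 < (x^T *m A *m x) 0 0.

(* A^{-1/2}: the (unique) symmetric positive definite S with S S = A^{-1},
   chosen by classical description; 0 if no such S exists. *)
Definition invsqrtmx (R : realType) (n : nat) (A : 'M[R]_n) : 'M[R]_n :=
  match pselect (exists S : 'M[R]_n, posdef S /\ S *m S = invmx A) with
  | left h => projT1 (cid h)
  | right _ => 0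
  end.

(* Cross-covariance V_{kl} = E(X_l (x) X_k), as a d_k x d_l matrix:
   (V_{kl})_{ij} = E(X_{k,i} X_{l,j}), X_{k,i} the i-th coordinate of X_k. *)
Definition covmx d (T : measurableType d) (R : realType) (P : probability T R)
  (K : nat) (dim : 'I_K -> nat) (X : forall k : 'I_K, 'I_(dim k) -> T -> R)
  (k l : 'I_K) : 'M[R]_(dim k, dim l) :=
  \matrix_(i, j) fine ('E_P[(fun w => X k i w * X l j w)%R])%E.

Definition Phi_op (R : realType) (K : nat) (dim : 'I_K -> nat)
  (V : forall k l : 'I_K, 'M[R]_(dim k, dim l)) : 'M[R]_(\sum_k dim k) :=
  \mxdiag_k V k k.

Definition Psi_op (R : realType) (K : nat) (dim : 'I_K -> nat)
  (V : forall k l : 'I_K, 'M[R]_(dim k, dim l)) : 'M[R]_(\sum_k dim k) :=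
  \mxblock_(k, l) (if k == l then 0 else V k l).

Definition Phi_invsqrt (R : realType) (K : nat) (dim : 'I_K -> nat)
  (V : forall k l : 'I_K, 'M[R]_(dim k, dim l)) : 'M[R]_(\sum_k dim k) :=
  \mxdiag_k invsqrtmx (V k k).

Definition T_op (R : realType) (K : nat) (dim : 'I_K -> nat)
  (V : forall k l : 'I_K, 'M[R]_(dim k, dim l)) : 'M[R]_(\sum_k dim k) :=
  Phi_invsqrt V *m Psi_op V *m Phi_invsqrt V.

(* Main.v *)
Require Import Defs.
From HB Require Import structures.
From mathcomp Require Import all_boot all_order all_algebra.
From mathcomp Require Import all_classical all_reals all_analysis.
From mathcomp Require Import complex.
From mathcomp Require Import ring lra.
Set Implicit Arguments. Unset Strict Implicit. Unset Printing Implicit Defensive.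
Import Order.TTheory GRing.Theory Num.Theory.
Local Open Scope ring_scope.


Lemma interp_ex (F : fieldType) (s : seq F) (y : F -> F) : uniq s ->
  exists q : {poly F}, forall x, x \in s -> q.[x] = y x.
Proof.
elim: s => [|a s IH] /=; first by move=> _; exists 0.
move=> /andP[nas us]; have [q Hq] := IH us.
pose w := \prod_(z <- s) ('X - z%:P).
have wa : w.[a] != 0.
  rewrite /w horner_prod prodf_seq_neq0; apply/allP => z zs /=.
  rewrite hornerXsubC subr_eq0; apply: contraNneq nas => ->; exact: zs.
exists (q + ((y a - q.[a]) / w.[a]) *: w) => x; rewrite inE => /orP[/eqP->|xs].
  by rewrite hornerD hornerZ divfK // addrC subrK.
have : root w x by rewrite /w root_prod_XsubC.
by rewrite hornerD hornerZ => /eqP ->; rewrite mulr0 addr0 Hq.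
Qed.

Lemma tr_horner (R : comNzRingType) n (A : 'M[R]_n.+1) p :
  (horner_mx A p)^T = horner_mx A^T p.
Proof.
elim/poly_ind: p => [|p c IH]; first by rewrite !rmorph0 trmx0.
rewrite !(rmorphD, rmorphM) /= !horner_mx_X !horner_mx_C raddfD /= tr_scalar_mx.
congr (_ + _); rewrite [_ * _]/(_ *m _) trmx_mul IH; apply: comm_mx_horner; exact: comm_mx_refl.
Qed.

Lemma mtm0 (R : realDomainType) m n (A : 'M[R]_(m, n)) : A^T *m A = 0 -> A = 0.
Proof.
move=> H; apply/matrixP => i j; rewrite mxE.
have /matrixP/(_ j j) := H; rewrite !mxE => /eqP.
rewrite psumr_eq0 => [/allP/(_ i (mem_index_enum _))|k _]; rewrite mxE.
  by rewrite -expr2 => /implyP/(_ isT); rewrite sqrf_eq0 => /eqP.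
by rewrite -expr2 sqr_ge0.
Qed.

Lemma sym_half (R : realDomainType) n (B : 'M[R]_n) m :
  B^T = B -> B ^+ (m + m) = 0 -> B ^+ m = 0.
Proof.
move=> sB H; apply: mtm0.
have -> : (B ^+ m)^T = B ^+ m.
  elim: (m) => [|t IHt]; first by rewrite !expr0 trmx1.
  by rewrite exprS [_ * _]/(_ *m _) trmx_mul IHt sB -[_ *m _]/(_ * _) -exprSr exprS.
by rewrite -H exprD.
Qed.

Lemma sym_nilp (R : realDomainType) n (B : 'M[R]_n) k :
  B^T = B -> B ^+ k = 0 -> B = 0.
Proof.
move=> sB Hk.
have H : B ^+ (2 ^ k) = 0.
  have le : (k <= 2 ^ k)%N by apply: ltnW; rewrite ltn_expl.
  by rewrite -(subnKC le) exprD Hk mul0r.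
elim: k H {Hk} => [|j IH] H; first by rewrite expn0 expr1 in H.
apply: IH; apply: sym_half => //; by rewrite addnn -mul2n -expnS.
Qed.

Section T.
Variable R : realType.
Variable n : nat.
Variable A : 'M[R]_n.+1.
Hypothesis pdA : posdef A.
Let C := R[i].
Let Ac := map_mx (real_complex R) A.
Lemma t1 : Ac \is hermsymmx.
Proof.
apply: realsym_hermsym.
  apply/is_hermitianmxP; rewrite expr0 scale1r.
  rewrite map_mx_id // /Ac map_trmx. by case: pdA => ->.
apply/mxOverP => i j; rewrite mxE; apply/complex_realP; eexists; reflexivity.
Qed.

Let P := spectralmx Ac.
Let d := spectral_diag Ac.
Lemma t2 : Ac = invmx P *m diag_mx d *m P.
Proof. exact/orthomx_spectralP/hermitian_normalmx/t1. Qed.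
Lemma Punit : P \in unitmx. Proof. exact: spectral_unit. Qed.
Let mu i := complex.Re (d 0 i).
Lemma t3 i : d 0 i = (mu i)%:C%C.
Proof.
have /mxOverP/(_ 0 i) := hermitian_spectral_diag_real t1.
by move=> /RRe_real.
Qed.
Lemma t4 i : eigenvalue A (mu i).
Proof.
have : eigenvalue Ac (d 0 i).
  apply/eigenvalueP; exists (row i P).
    rewrite -row_mul.
    have -> : P *m Ac = diag_mx d *m P.
      by rewrite t2 !mulmxA mulmxV ?Punit // mul1mx.
    by rewrite row_mul row_diag_mx -scalemxAl -rowE.
  apply/eqP => /(congr1 (mulmx^~ (invmx P))).
  rewrite -row_mul mulmxV ?Punit // mul0mx => /rowP/(_ i).
  by rewrite !mxE eqxx /= => /eqP; rewrite oner_eq0.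
rewrite !eigenvalue_root_char /Ac -map_char_poly t3 fmorph_root //.
Qed.

Lemma vvT_ge0 m (v : 'rV[R]_m) : 0 <= (v *m v^T) 0 0.
Proof. rewrite mxE; apply: sumr_ge0 => j _; rewrite mxE -expr2; exact: sqr_ge0. Qed.

Lemma t5 i : 0 < mu i.
Proof.
have /eigenvalueP [v vA vn0] := t4 i.
have := pdA.2 (v^T); rewrite trmx_eq0 => /(_ vn0).
rewrite trmxK vA -scalemxAl mxE => H.
have := vvT_ge0 v; set s := (v *m v^T) 0 0 => s0.
rewrite ltNge; apply/negP => mu0.
by have := mulr_le0_ge0 mu0 s0; rewrite leNgt H.
Qed.

Lemma t6 (g : {poly R}) : (forall i, g.[mu i] = 0) -> horner_mx A g = 0.
Proof.
move=> Hg; apply: (@map_mx_inj _ _ (real_complex R)).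
rewrite map_mx0 map_horner_mx -/Ac t2 horner_mx_uconjC ?Punit //.
rewrite horner_mx_diag.
have -> : map_mx (horner (map_poly (real_complex R) g)) d = 0.
  by apply/rowP => i; rewrite !mxE t3 horner_map /= Hg.
have -> : diag_mx (0 : 'rV[C]_n.+1) = 0 by apply/matrixP => i j; rewrite !mxE mul0rn.
by rewrite mulmx0 mul0mx.
Qed.

Lemma ztz_gt0 m (z : 'cV[R]_m) : z != 0 -> 0 < (z^T *m z) 0 0.
Proof.
move=> zn0; rewrite lt_def; apply/andP; split; last first.
  by rewrite -(trmxK z) trmxK; have := vvT_ge0 z^T; rewrite trmxK.
apply/negP => /eqP H; move/negP: zn0; apply; apply/eqP/mtm0.
by apply/matrixP => i j; rewrite !ord1 H mxE.
Qed.

Lemma t7 : exists S, posdef S /\ S *m S = invmx A.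
Proof.
pose s := undup [seq mu i | i <- enum 'I_n.+1].
pose y (x : R) := (Num.sqrt (Num.sqrt x))^-1.
have [q Hq] := interp_ex (s := s) y (undup_uniq _).
pose Q := horner_mx A q.
have HQ : Q ^+ 4 * A = 1.
  apply/eqP; rewrite -subr_eq0; apply/eqP.
  have := t6 (g := q ^+ 4 * 'X - 1).
  rewrite rmorphB rmorphM rmorphXn /= horner_mx_X rmorph1; apply => i.
  rewrite !hornerE Hq; last by rewrite mem_undup; apply: map_f; rewrite mem_enum.
  rewrite /y exprVn -[4%N]/(2 * 2)%N exprM sqr_sqrtr ?sqrtr_ge0 // sqr_sqrtr ?ltW ?t5 //.
  by rewrite mulVf ?subrr // gt_eqF ?t5.
have QT : Q^T = Q by rewrite /Q tr_horner; case: pdA => ->.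
have [Qu _] : Q \in unitmx /\ (Q ^+ 3 * A) \in unitmx.
  by apply: mulmx1_unit; rewrite -[_ *m _]/(_ * _) mulrA -exprS.
have [_ Au] : Q ^+ 4 \in unitmx /\ A \in unitmx by apply: mulmx1_unit.
exists (Q *m Q); split; last first.
  rewrite -[LHS](mulmxK Au).
  have -> : Q *m Q *m (Q *m Q) *m A = 1.
    by rewrite -HQ -[4%N]/(2 + 2)%N exprD expr2.
  exact: mul1mx.
split; first by rewrite trmx_mul QT.
move=> x xn0.
have -> : x^T *m (Q *m Q) *m x = (Q *m x)^T *m (Q *m x).
  by rewrite trmx_mul QT !mulmxA.
apply: ztz_gt0; apply/negP => /eqP H; move/negP: xn0; apply.
by rewrite -(mulKmx Qu x) H mulmx0.
Qed.
End T.



Lemma absprod (R : realDomainType) (x y : R) : `|x * y| <= x ^+ 2 + y ^+ 2.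
Proof.
rewrite normrM -(real_normK (num_real x)) -(real_normK (num_real y)).
have := normr_ge0 x; have := normr_ge0 y.
set a := `|x|; set b := `|y|; move=> hb ha.
nra.
Qed.

Lemma gram_psd d (Omega : measurableType d) (R : realType) (P : probability Omega R)
  (I : finType) (Z : I -> Omega -> R) (a : I -> R) :
  (forall t s, P.-integrable setT (fun w => (Z t w * Z s w)%:E)) ->
  0 <= \sum_t \sum_s a t * a s * fine ('E_P[fun w => (Z t w * Z s w)%R])%E.
Proof.
move=> iZ; have mT : measurable [set: Omega] := measurableT.
have E : (\int[P]_w ((\sum_t a t * Z t w) ^+ 2)%:E =
          (\sum_t \sum_s a t * a s * fine ('E_P[fun w => (Z t w * Z s w)%R]))%:E)%E.
  have pw w : (((\sum_t a t * Z t w) ^+ 2)%:E =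
      \sum_t \sum_s ((a t * a s)%:E * (Z t w * Z s w)%:E))%E.
    rewrite expr2 mulr_suml -sumEFin; apply: eq_bigr => t _.
    rewrite mulr_sumr -sumEFin; apply: eq_bigr => s _.
    by rewrite -EFinM mulrACA.
  under eq_integral => w _ do rewrite pw.
  rewrite integral_sum //; last first.
    by move=> t; apply: (integrable_sum mT) => s _; exact: (integrableZl mT).
  rewrite -sumEFin; apply: eq_bigr => t _.
  rewrite integral_sum //; last by move=> s; exact: (integrableZl mT).
  rewrite -sumEFin; apply: eq_bigr => s _.
  rewrite integralZl // unlock [RHS]EFinM fineK //.
  exact: integrable_fin_num.
rewrite -lee_fin -E; apply: integral_ge0 => w _.
by rewrite lee_fin sqr_ge0.
Qed.

Lemma sum_sig (R : realType) (K : nat) (dim : 'I_K -> nat) (F : forall k, 'I_(dim k) -> R) :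
  \sum_(p : {k : 'I_K & 'I_(dim k)}) F (tag p) (tagged p) = \sum_k \sum_(i < dim k) F k i.
Proof. by rewrite sig_big_dep. Qed.

Lemma sum_sig' (R : realType) (K : nat) (dim : 'I_K -> nat) (G : {k : 'I_K & 'I_(dim k)} -> R) :
  \sum_p G p = \sum_k \sum_(i < dim k) G (Tagged (fun k => 'I_(dim k)) i).
Proof.
rewrite -(sum_sig (fun k i => G (Tagged (fun k => 'I_(dim k)) i))).
by apply: eq_bigr => -[k i].
Qed.

Section Cov.
Local Unset Implicit Arguments.
Variables (d : measure_display) (Omega : measurableType d) (R : realType)
  (P : probability Omega R) (K : nat) (dim : 'I_K -> nat)
  (X : forall k : 'I_K, 'I_(dim k) -> Omega -> R).
Hypothesis mX : forall k i, measurable_fun setT (X k i).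
Hypothesis iX : forall k, P.-integrable setT
               (fun w => (\sum_(i < dim k) X k i w ^+ 2)%:E).

Lemma sq_le_sum k i w : X k i w ^+ 2 <= \sum_(i < dim k) X k i w ^+ 2.
Proof.
rewrite (bigD1 i) //= lerDl; apply: sumr_ge0 => j _; exact: sqr_ge0.
Qed.

Lemma intprod k i l j : P.-integrable setT (fun w => (X k i w * X l j w)%:E).
Proof.
have mT : measurable [set: Omega] := measurableT.
apply: (le_integrable mT (g := fun w => ((\sum_(i < dim k) X k i w ^+ 2)%:E
    + (\sum_(j < dim l) X l j w ^+ 2)%:E)%E)).
- by apply/measurable_realfun.measurable_EFinP; apply: measurable_realfun.measurable_funM.
- move=> w _; rewrite -EFinD !abse_EFin lee_fin.
  have h1 := sq_le_sum k i w; have h2 := sq_le_sum l j w.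
  have s1 : 0 <= \sum_(i < dim k) X k i w ^+ 2 by apply: sumr_ge0 => ? _; exact: sqr_ge0.
  have s2 : 0 <= \sum_(j < dim l) X l j w ^+ 2 by apply: sumr_ge0 => ? _; exact: sqr_ge0.
  rewrite [X in _ <= X]ger0_norm ?addr_ge0 //.
  exact: (le_trans (absprod _ _) (lerD h1 h2)).
- exact: (integrableD mT).
Qed.

Lemma cov_psd (u : forall k, 'rV[R]_(dim k)) :
  0 <= \sum_k \sum_l (u k *m covmx P X k l *m (u l)^T) 0 0.
Proof.
have := @gram_psd _ _ _ P _ (fun p : {k : 'I_K & 'I_(dim k)} => X (tag p) (tagged p))
  (fun p => u (tag p) 0 (tagged p)) (fun p q => intprod _ _ _ _).
rewrite sum_sig'.
under eq_bigr => k _ do under eq_bigr => i _ do rewrite sum_sig'.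
move=> H; apply: (le_trans H) => {H}; rewrite le_eqVlt; apply/orP; left; apply/eqP.
apply: eq_bigr => k _; rewrite exchange_big /=; apply: eq_bigr => l _.
rewrite !mxE; rewrite exchange_big; apply: eq_bigr => j _ /=.
rewrite !mxE mulr_suml; apply: eq_bigr => i _; rewrite !mxE.
by rewrite mulrAC.
Qed.
End Cov.



Lemma sqrt_ex (R : realType) n (A : 'M[R]_n) : posdef A ->
  exists S, posdef S /\ S *m S = invmx A.
Proof.
case: n A => [|n] A pdA; last exact: t7.
exists 0; split; last by rewrite !thinmx0.
split; first by rewrite trmx0.
by move=> x; rewrite [x]flatmx0 eqxx.
Qed.

Lemma invsqrtP (R : realType) n (A : 'M[R]_n) : posdef A ->
  posdef (invsqrtmx A) /\ invsqrtmx A *m invsqrtmx A = invmx A.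
Proof.
move=> pdA; rewrite /invsqrtmx; case: pselect => [h|nh].
  by case: (cid h).
by exfalso; apply: nh; exact: sqrt_ex.
Qed.

Lemma mxZE (R : pzRingType) m n (a : R) (A : 'M[R]_(m, n)) i j :
  (a *: A) i j = a * A i j.
Proof. by rewrite mxE. Qed.

Lemma qfE (R : comPzRingType) m p (x : 'rV[R]_m) (M : 'M[R]_(m, p)) (y : 'rV[R]_p) :
  (x *m M *m y^T) 0 0 = \sum_i \sum_j x 0 i * y 0 j * M i j.
Proof.
rewrite mxE exchange_big; apply: eq_bigr => j _.
rewrite mxE [y^T _ _]mxE mulr_suml.
by apply: eq_bigr => i _; rewrite mulrAC.
Qed.

Section Main.
Local Unset Implicit Arguments.
Variables (d : measure_display) (Omega : measurableType d) (R : realType)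
  (P : probability Omega R) (K : nat) (dim : 'I_K -> nat)
  (X : forall k : 'I_K, 'I_(dim k) -> Omega -> R).
Hypothesis mX : forall k i, measurable_fun setT (X k i).
Hypothesis iX : forall k, P.-integrable setT
               (fun w => (\sum_(i < dim k) X k i w ^+ 2)%:E).
Let V := covmx P X.

Lemma Vsym k l : (V k l)^T = V l k.
Proof.
apply/matrixP => i j; rewrite !mxE; congr (fine _); congr expectation.
by apply: funext => w; rewrite mulrC.
Qed.

Lemma pair_psd k l (x : 'rV[R]_(dim k)) (y : 'rV[R]_(dim l)) :
  0 <= (x *m V k k *m x^T) 0 0 + (x *m V k l *m y^T) 0 0
     + ((y *m V l k *m x^T) 0 0 + (y *m V l l *m y^T) 0 0).
Proof.
pose Z (t : ('I_(dim k) + 'I_(dim l))%type) :=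
  match t with inl i => X k i | inr j => X l j end.
pose a (t : ('I_(dim k) + 'I_(dim l))%type) :=
  match t with inl i => x 0 i | inr j => y 0 j end.
have iZ : forall t s, P.-integrable setT (fun w => (Z t w * Z s w)%:E).
  by case=> [i|j] [i'|j']; apply: intprod.
have := gram_psd a iZ.
rewrite big_sumType /=.
under eq_bigr do rewrite big_sumType.
under [X in _ + X]eq_bigr do rewrite big_sumType.
rewrite !big_split /= !qfE.
move=> H; apply: (le_trans H); rewrite le_eqVlt; apply/orP; left; apply/eqP.
congr (_ + _ + (_ + _)); apply: eq_bigr => i _; apply: eq_bigr => j _; by rewrite /V /covmx mxE.
Qed.

Lemma qf_tr k l (x : 'rV[R]_(dim k)) (y : 'rV[R]_(dim l)) :
  (y *m V l k *m x^T) 0 0 = (x *m V k l *m y^T) 0 0.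
Proof.
have -> : (y *m V l k *m x^T) 0 0 = ((y *m V l k *m x^T)^T) 0 0 by rewrite [RHS]mxE.
rewrite !trmx_mul trmxK Vsym.
by rewrite mulmxA.
Qed.

Lemma qf_ge0 k (x : 'rV[R]_(dim k)) : 0 <= (x *m V k k *m x^T) 0 0.
Proof.
have := pair_psd k k x 0.
by rewrite trmx0 !mulmx0 !mul0mx !mxE !addr0.
Qed.

Lemma Vpd k : V k k \in unitmx -> posdef (V k k).
Proof.
move=> Vu; split; first exact: Vsym.
move=> x xn0; set z := x^T.
have q0 := qf_ge0 _ z.
rewrite -[x in _ *m x]trmxK -/z lt_def q0 andbT; apply/negP => /eqP qz.
pose y := z *m V k k.
set b := (z *m V k k *m y^T) 0 0.
set c := (y *m V k k *m y^T) 0 0.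
have c0 : 0 <= c := qf_ge0 _ y.
have B : forall s, 0 <= 2 * s * b + s ^+ 2 * c.
  move=> s; have := pair_psd k k z (s *: y).
  rewrite qf_tr qz -!scalemxAl linearZ /= -scalemxAr.
  have e1 : (y *m V k k *m z^T) 0 0 = b by rewrite qf_tr.
  move: e1; set t1 := (y *m V k k *m z^T); set t2 := (y *m V k k *m y^T).
  rewrite !mxE => e1; rewrite e1 -/c => H.
  apply: (le_trans H); rewrite le_eqVlt; apply/orP; left; apply/eqP.
  rewrite /c [in RHS]mxE; ring.
have b0 : b = 0.
  have c1 : 0 < c + 1 by rewrite ltr_wpDl.
  have := B (- b / (c + 1)).
  have -> : 2 * (- b / (c + 1)) * b + (- b / (c + 1)) ^+ 2 * c =
            - (b ^+ 2 * (c + 2)) / (c + 1) ^+ 2.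
    by field; rewrite gt_eqF.
  rewrite pmulr_lge0 ?invr_gt0 ?exprn_gt0 // oppr_ge0 => H.
  have bc : 0 <= b ^+ 2 * c by rewrite mulr_ge0 ?sqr_ge0.
  have b2 : b ^+ 2 <= 0 by lra.
  by apply/eqP; rewrite -sqrf_eq0 eq_le b2 sqr_ge0.
have y0 : y = 0.
  apply/eqP; apply/negPn/negP => yn0.
  have := ztz_gt0 (z := y^T); rewrite trmx_eq0 => /(_ yn0); rewrite trmxK.
  have -> : (y *m y^T) 0 0 = b by [].
  by rewrite b0 ltxx.
move/eqP: xn0; apply; apply/eqP; rewrite -trmx_eq0 -/z.
by rewrite -(mulmxK Vu z) -/y y0 mul0mx.
Qed.

Lemma pair_ineq k l (x : 'rV[R]_(dim k)) (y : 'rV[R]_(dim l)) :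
  2 * (x *m V k l *m y^T) 0 0 <= (x *m V k k *m x^T) 0 0 + (y *m V l l *m y^T) 0 0.
Proof.
have := pair_psd k l x ((-1) *: y).
rewrite qf_tr -!scalemxAl linearZ /= -!scalemxAr !mxZE.
rewrite (qf_tr k l x y); lra.
Qed.
End Main.

Lemma mxdiag_mul (R : pzRingType) p (p_ : 'I_p -> nat) (A B : forall i, 'M[R]_(p_ i)) :
  \mxdiag_i A i *m \mxdiag_i B i = \mxdiag_i (A i *m B i).
Proof.
rewrite [X in X *m _]/mxdiag mul_mxblock_mxdiag /mxdiag; apply: eq_mxblock => i j.
by case: eqVneq => [<-|_]; rewrite ?conform_mx_id ?mul0mx.
Qed.

Lemma qf_block (R : comPzRingType) p (p_ : 'I_p -> nat) (w : 'rV[R]_(\sum_i p_ i))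
  (B : forall i j, 'M[R]_(p_ i, p_ j)) :
  (w *m \mxblock_(i, j) B i j *m w^T) 0 0 =
  \sum_j \sum_i (submxrow w i *m B i j *m (submxrow w j)^T) 0 0.
Proof.
transitivity (((\mxrow_j submxrow w j) *m \mxblock_(i, j) B i j *m
   (\mxrow_j submxrow w j)^T) 0 0); first by rewrite submxrowK.
rewrite mul_mxrow_mxblock tr_mxrow mul_mxrow_mxcol summxE.
apply: eq_bigr => j _; rewrite mulmx_suml summxE; apply: eq_bigr => i _.
done.
Qed.

Lemma qf_diag (R : comPzRingType) p (p_ : 'I_p -> nat) (w : 'rV[R]_(\sum_i p_ i))
  (D : forall i, 'M[R]_(p_ i)) :
  (w *m \mxdiag_i D i *m w^T) 0 0 =
  \sum_i (submxrow w i *m D i *m (submxrow w i)^T) 0 0.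
Proof.
transitivity (((\mxrow_j submxrow w j) *m \mxdiag_i D i *m
   (\mxrow_j submxrow w j)^T) 0 0); first by rewrite submxrowK.
by rewrite mul_mxrow_mxdiag tr_mxrow mul_mxrow_mxcol summxE.
Qed.

Lemma sum_offdiag (R : realDomainType) K (F : 'I_K -> 'I_K -> R) :
  \sum_k \sum_l F k l = \sum_k F k k + \sum_l \sum_k (if k == l then 0 else F k l).
Proof.
rewrite exchange_big -big_split /=; apply: eq_bigr => l _.
rewrite (bigD1 l) //= [X in _ = _ + X](bigD1 l) //= eqxx add0r.
congr (_ + _); apply: eq_bigr => k kl; by rewrite (negbTE kl).
Qed.

Lemma sum_offdiag_const (R : realDomainType) K (c : R) :
  \sum_(l < K) \sum_(k < K) (if k == l then 0 else c) = (K * (K - 1))%:R * c.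
Proof.
under eq_bigr => l _.
  rewrite (bigD1 l) //= eqxx add0r.
  under eq_bigr => k kl do rewrite (negbTE kl).
  rewrite sumr_const cardC1 card_ord.
  over.
rewrite sumr_const card_ord -mulrnA mulr_natl mulnC.
by case: K => //= K; rewrite subn1.
Qed.


Lemma mx0E (R : realType) n (i j : 'I_n) : (0 : 'M[R]_n) i j = 0.
Proof. by rewrite mxE. Qed.

Lemma sym_char0 (R : realType) n (B : 'M[R]_n) : B^T = B -> char_poly B = 'X^n -> B = 0.
Proof.
case: n B => [|n] B sB hc; first by rewrite thinmx0.
have := Cayley_Hamilton B; rewrite hc rmorphXn /= horner_mx_X.
exact: sym_nilp sB.
Qed.

Unset Implicit Arguments.

Theorem theorem2p2 (d : measure_display) (Omega : measurableType d)
  (R : realType) (P : probability Omega R)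
  (K : nat) (dim : 'I_K -> nat)
  (X : forall k : 'I_K, 'I_(dim k) -> Omega -> R) :
  (2 <= K)%N ->
  (forall k i, measurable_fun setT (X k i)) ->
  (forall k, P.-integrable setT
               (fun w => (\sum_(i < dim k) X k i w ^+ 2)%:E)) ->
  (forall k i, 'E_P[X k i]%E = 0%E) ->
  (forall k, covmx P X k k \in unitmx) ->
  forall rho : 'I_(\sum_k dim k) -> R,
    (forall j j' : 'I_(\sum_k dim k), (j <= j')%N -> rho j' <= rho j) ->
    char_poly (T_op (covmx P X)) = \prod_j ('X - (rho j)%:P) ->
    (forall j, -1 <= rho j <= (K * (K - 1))%:R) /\
    ((forall j, rho j = 0) <->
       (forall k l : 'I_K, k != l -> covmx P X k l = 0)).
Proof.
move=> K2 mX iX _ Vunit rho _ Hchar.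
set V := covmx P X in Hchar *.
have pd k : posdef (V k k) := Vpd _ _ _ P _ _ X mX iX k (Vunit k).
have HS k := invsqrtP (pd k).
set S := Phi_invsqrt V.
set Phi := Phi_op V.
set Psi := Psi_op V.
have ST : S^T = S.
  by rewrite /S /Phi_invsqrt tr_mxdiag; apply: eq_mxdiag => k; case: (HS k) => -[->].
have SPS : S *m Phi *m S = 1%:M.
  rewrite /S /Phi_invsqrt /Phi /Phi_op !mxdiag_mul -(mxdiagZ 1); apply: eq_mxdiag => k.
  case: (HS k) => _; set U := invsqrtmx (V k k) => UU.
  have Vu := Vunit k.
  have [Uu _] : U \in unitmx /\ (U *m V k k) \in unitmx.
    by apply: mulmx1_unit; rewrite mulmxA UU mulVmx.
  have H : U *m (U *m V k k *m U) = U *m 1%:M by rewrite !mulmxA UU mulVmx // mul1mx mulmx1.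
  exact: (can_inj (mulKmx Uu)) H.
have [Su _] : S \in unitmx /\ (Phi *m S) \in unitmx.
  by apply: mulmx1_unit; rewrite mulmxA.
have PsiT : Psi^T = Psi.
  rewrite /Psi /Psi_op tr_mxblock; apply: eq_mxblock => k l.
  case: eqVneq => [->|kl]; first by rewrite trmx0.
  by rewrite (Vsym _ _ _ P _ _ X).
have TE : T_op V = S *m Psi *m S by [].
have TT : (T_op V)^T = T_op V by rewrite TE !trmx_mul ST PsiT mulmxA.
split.
  move=> j.
  have : root (char_poly (T_op V)) (rho j).
    by rewrite Hchar /root horner_prod (bigD1 j) //= hornerXsubC subrr mul0r.
  rewrite -eigenvalue_root_char => /eigenvalueP [v vT vn0].
  pose w := v *m S.
  have vpos : 0 < (v *m v^T) 0 0.
    by have := ztz_gt0 (z := v^T); rewrite trmxK trmx_eq0 => /(_ vn0).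
  have Hphi : (w *m Phi *m w^T) 0 0 = (v *m v^T) 0 0.
    rewrite /w trmx_mul ST.
    have -> : v *m S *m Phi *m (S *m v^T) = v *m (S *m Phi *m S) *m v^T by rewrite !mulmxA.
    by rewrite SPS mulmx1.
  have Hpsi : (w *m Psi *m w^T) 0 0 = rho j * (v *m v^T) 0 0.
    rewrite /w trmx_mul ST.
    have -> : v *m S *m Psi *m (S *m v^T) = v *m T_op V *m v^T by rewrite TE !mulmxA.
    by rewrite vT -scalemxAl mxZE.
  pose wk k := submxrow w k.
  pose x k l := (wk k *m V k l *m (wk l)^T) 0 0.
  have Phiq : (w *m Phi *m w^T) 0 0 = \sum_k x k k by rewrite /Phi /Phi_op qf_diag.
  have Psiq : (w *m Psi *m w^T) 0 0 = \sum_l \sum_k (if k == l then 0 else x k l).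
    rewrite /Psi /Psi_op qf_block; apply: eq_bigr => l _; apply: eq_bigr => k _.
    by rewrite /x; case: ifP => _ //; rewrite mulmx0 mul0mx mxE.
  set q := (v *m v^T) 0 0 in vpos Hphi Hpsi.
  apply/andP; split.
    have := cov_psd _ _ _ P _ _ X mX iX wk; rewrite -/V -/(x _ _) sum_offdiag -Phiq -Psiq Hphi Hpsi.
    move=> H.
    have : 0 <= (1 + rho j) * q by rewrite mulrDl mul1r.
    rewrite pmulr_lge0 // => H1; lra.
  have xk0 k : 0 <= x k k by exact: (qf_ge0 _ _ _ P _ _ X mX iX k (wk k)).
  have xle k l : k != l -> x k l <= \sum_m x m m.
    move=> kl; have := pair_ineq _ _ _ P _ _ X mX iX k l (wk k) (wk l); move=> H; change (is_true (2 * x k l <= x k k + x l l)%R) in H.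
    have Hk : x k k <= \sum_m x m m.
      by rewrite (bigD1 k) //= lerDl; apply: sumr_ge0 => m _.
    have Hl : x l l <= \sum_m x m m.
      by rewrite (bigD1 l) //= lerDl; apply: sumr_ge0 => m _.
    lra.
  have : rho j * q <= (K * (K - 1))%:R * q.
    rewrite -Hpsi Psiq -Hphi Phiq -sum_offdiag_const.
    apply: ler_sum => l _; apply: ler_sum => k _.
    case: eqVneq => [_|kl] //; exact: xle kl.
  by rewrite ler_pM2r.
have Tchar0 : char_poly (0 : 'M[R]_(\sum_k dim k)) = 'X^(\sum_k dim k).
  rewrite char_poly_trig; last by apply/is_trig_mxP => i0 j0 _; rewrite mxE.
  rewrite (eq_bigr (fun _ => 'X)) ?prodr_const ?card_ord // => i _; by rewrite mx0E polyC0 subr0.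
split.
  move=> h0 k l kl.
  have : char_poly (T_op V) = 'X^(\sum_k dim k).
    rewrite Hchar; under eq_bigr do rewrite h0 polyC0 subr0.
    by rewrite prodr_const card_ord.
  move/(sym_char0 TT) => T0.
  have Psi0 : Psi = 0.
    have := congr1 (fun M => invmx S *m M *m invmx S) T0 => /=.
    by rewrite TE !mulmxA mulmxK // mulVmx // mul1mx mulmx0 mul0mx.
  have := mxblockK (fun k l => if k == l then 0 else V k l) k l.
  rewrite (negbTE kl) => <-.
  have -> : \mxblock_(k, l) (if k == l then 0 else V k l) = Psi by [].
  by rewrite Psi0 submxblock0.
move=> h j.
have Psi0 : Psi = 0.
  have -> : Psi = \mxblock_(k, l) (0 : 'M[R]_(dim k, dim l)).
    apply: eq_mxblock => k l; case: eqVneq => [_|kl] //; exact: h.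
  exact: mxblock0.
have T0 : T_op V = 0 by rewrite TE Psi0 mulmx0 mul0mx.
move: Hchar; rewrite T0 Tchar0 => /(congr1 (horner^~ (rho j))).
rewrite horner_prod (bigD1 j) //= hornerXsubC subrr mul0r hornerXn.
by move/eqP; rewrite expf_eq0 => /andP[_ /eqP].
Qed.
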